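(* Let $A,B,C,D$ be pairwise intersecting compact convex sets in the plane. If $o(ABC)=o(ABD)=0$ but $o(ACD)\ne0$ and $o(BCD)\ne0$, then $o(ACD)=o(BCD)$.
   Context: For three pairwise intersecting compact convex sets $X,Y,Z$ in the plane: $o(XYZ)=0$ if $X\cap Y\cap Z\neq\emptyset$; otherwise $o(XYZ)=o(xyz)$ for any $x\in Y\cap Z$, $y\in X\cap Z$, $z\in X\cap Y$, where for points $o(xyz)=+1$ for a counterclockwise and $-1$ for a clockwise triangle (independent of the choice). *)

(* Defs.v *)
From HB Require Import structures.
From mathcomp Require Import all_boot all_order all_algebra.
From mathcomp Require Import all_classical all_reals topology normedtype.
Set Implicit Arguments. Unset Strict Implicit. Unset Printing Implicit Defensive.
Import Order.TTheory GRing.Theory Num.Theory numFieldNormedType.Exports.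
Local Open Scope classical_set_scope.
Local Open Scope ring_scope.

Section Plane.
Variable R : realType.
Notation pt := (R * R)%type.

Definition convex_set (A : set pt) : Prop :=
  forall x y : pt, A x -> A y -> forall t : R, 0 <= t -> t <= 1 ->
    A ((1 - t) * x.1 + t * y.1, (1 - t) * x.2 + t * y.2).

Definition compact_convex (A : set pt) : Prop := compact A /\ convex_set A.

(* twice the signed area of triangle xyz *)
Definition det3 (x y z : pt) : R :=
  (y.1 - x.1) * (z.2 - x.2) - (y.2 - x.2) * (z.1 - x.1).

(* orientation of points: +1 ccw, -1 cw, 0 degenerate *)
Definition opt (x y z : pt) : int := sgz (det3 x y z).

(* orientation of three sets: 0 if they share a point, otherwise the
   orientation of (some chosen) x in Y∩Z, y in X∩Z, z in X∩Y *)
Definition oset (X Y Z : set pt) : int :=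
  if `[< exists p, X p /\ Y p /\ Z p >] then 0
  else opt (get (Y `&` Z)) (get (X `&` Z)) (get (X `&` Y)).

End Plane.

(* Main.v *)
Require Import Defs.
From HB Require Import structures.
From mathcomp Require Import all_boot all_order all_algebra.
From mathcomp Require Import all_classical all_reals topology normedtype.
From mathcomp Require Import ring lra.
Import Order.TTheory GRing.Theory Num.Theory numFieldNormedType.Exports.
Local Open Scope classical_set_scope.
Local Open Scope ring_scope.

Lemma convex_comb {R : realType} {A : set (R * R)%type} {x y p : (R * R)%type} {t : R} :
  convex_set A -> A x -> A y -> 0 <= t -> t <= 1 ->
  p.1 = (1 - t) * x.1 + t * y.1 -> p.2 = (1 - t) * x.2 + t * y.2 -> A p.
Proof.
move=> cA Ax Ay t0 t1; case: p => a b /= -> ->; exact: cA.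
Qed.

Lemma collinear3 {R : realType} {x y z : (R * R)%type} : x != y -> det3 x y z = 0 ->
  exists s : R, z.1 = x.1 + s * (y.1 - x.1) /\ z.2 = x.2 + s * (y.2 - x.2).
Proof.
move=> xy; rewrite /det3 => d0.
have [e1|n1] := eqVneq (y.1 - x.1) 0.
- have n2 : y.2 - x.2 != 0.
    apply: contraNneq xy => /eqP; rewrite subr_eq0 => /eqP e2.
    move/eqP: e1; rewrite subr_eq0 => /eqP e1.
    by move: e1 e2; clear d0; case: x => a b; case: y => c d /= -> ->.
  have h : (y.2 - x.2) * (z.1 - x.1) = 0.
    by move: d0; rewrite e1 mul0r sub0r => /eqP; rewrite oppr_eq0 => /eqP.
  move/eqP: h; rewrite mulf_eq0 (negbTE n2) /= => /eqP h.
  exists ((z.2 - x.2) / (y.2 - x.2)); split.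
  + rewrite e1 mulr0 addr0; lra.
  + by rewrite divfK // addrC subrK.
- have n1' := n1.
  exists ((z.1 - x.1) / (y.1 - x.1)); split.
  + by rewrite divfK // addrC subrK.
  + apply: (mulfI n1'); rewrite mulrDr.
    have -> : (y.1 - x.1) * ((z.1 - x.1) / (y.1 - x.1) * (y.2 - x.2))
             = (z.1 - x.1) * (y.2 - x.2) by field.
    have : (y.1 - x.1) * (z.2 - x.2) = (y.2 - x.2) * (z.1 - x.1).
      by apply/eqP; rewrite -subr_eq0 d0.
    move=> h; lra.
Qed.

Lemma nondeg {R : realType} {X Y Z : set (R * R)%type} {x y z} :
  convex_set X -> convex_set Y -> convex_set Z ->
  ~ (exists p, X p /\ Y p /\ Z p) ->
  Y x -> Z x -> X y -> Z y -> X z -> Y z -> det3 x y z != 0.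
Proof.
move=> cX cY cZ nt Yx Zx Xy Zy Xz Yz; apply/eqP => d0.
have xy : x != y by apply/eqP => e; apply: nt; exists x; subst; tauto.
have [s [h1 h2]] := collinear3 xy d0.
case: (leP 0 s) => s0; [case: (leP s 1) => s1|].
- apply: nt; exists z; split => //; split => //.
  by apply: (convex_comb cZ Zx Zy s0 s1); [rewrite h1|rewrite h2]; ring.
- have sn0 : s != 0 by apply/eqP => e; rewrite e in s1; lra.
  have u0 : 0 <= s^-1 by rewrite invr_ge0; lra.
  have u1 : s^-1 <= 1 by rewrite invf_le1; lra.
  apply: nt; exists y; split => //; split => //.
  by apply: (convex_comb cY Yx Yz u0 u1); [rewrite h1|rewrite h2]; field.
- have sn0 : 1 - s != 0 by apply/eqP => e; lra.
  have u0 : 0 <= (1 - s)^-1 by rewrite invr_ge0; lra.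
  have u1 : (1 - s)^-1 <= 1 by rewrite invf_le1; lra.
  apply: nt; exists x; split; last by [].
  by apply: (convex_comb cX Xy Xz u0 u1); [rewrite h1|rewrite h2]; field.
Qed.

Lemma det3_affine {R : realType} (x y z1 z2 : (R * R)%type) (t : R) :
  det3 x y ((1 - t) * z1.1 + t * z2.1, (1 - t) * z1.2 + t * z2.2) =
  (1 - t) * det3 x y z1 + t * det3 x y z2.
Proof. rewrite /det3 /=; ring. Qed.

Lemma sgz3 {R : realType} {X Y Z : set (R * R)%type} {x y z1 z2} :
  convex_set X -> convex_set Y -> convex_set Z ->
  ~ (exists p, X p /\ Y p /\ Z p) ->
  Y x -> Z x -> X y -> Z y -> X z1 -> Y z1 -> X z2 -> Y z2 ->
  sgz (det3 x y z1) = sgz (det3 x y z2).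
Proof.
move=> cX cY cZ nt Yx Zx Xy Zy Xz1 Yz1 Xz2 Yz2.
have n1 := nondeg cX cY cZ nt Yx Zx Xy Zy Xz1 Yz1.
have n2 := nondeg cX cY cZ nt Yx Zx Xy Zy Xz2 Yz2.
move: n1 n2; set d1 := det3 x y z1; set d2 := det3 x y z2 => n1 n2.
have nn : ~ (d1 * d2 < 0).
  move=> neg.
  have dn : d1 - d2 != 0.
    apply/eqP => e; have e' : d1 = d2 by lra.
    by rewrite e' in neg; nra.
  set t := d1 / (d1 - d2).
  have ht : t * (d1 - d2) = d1 by rewrite /t divfK.
  have t0 : 0 <= t by nra.
  have t1 : t <= 1 by nra.
  have := nondeg cX cY cZ nt Yx Zx Xy Zy
    (cX _ _ Xz1 Xz2 t t0 t1) (cY _ _ Yz1 Yz2 t t0 t1).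
  rewrite det3_affine -/d1 -/d2.
  have -> : (1 - t) * d1 + t * d2 = 0 by nra.
  by rewrite eqxx.
case: (ltrgtP d1 0) => h1; case: (ltrgtP d2 0) => h2;
  first [rewrite (ltr0_sgz h1) | rewrite (gtr0_sgz h1) | idtac];
  first [rewrite (ltr0_sgz h2) | rewrite (gtr0_sgz h2) | idtac] => //;
  try (exfalso; apply: nn; nra);
  by move: n1 n2; rewrite ?h1 ?h2 eqxx.
Qed.

Lemma det3_cyc {R : realType} (x y z : (R * R)%type) : det3 x y z = det3 z x y.
Proof. rewrite /det3; ring. Qed.

Lemma oset0_ex {R : realType} {X Y Z : set (R * R)%type} :
  convex_set X -> convex_set Y -> convex_set Z ->
  X `&` Y !=set0 -> X `&` Z !=set0 -> Y `&` Z !=set0 ->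
  oset X Y Z = 0 -> exists p, X p /\ Y p /\ Z p.
Proof.
move=> cX cY cZ nXY nXZ nYZ; rewrite /oset; case: asboolP => [//|nt].
rewrite /opt => /eqP; rewrite sgz_eq0 => /eqP d0; exfalso.
have [Yx Zx] := getPex nYZ. have [Xy Zy] := getPex nXZ.
have [Xz Yz] := getPex nXY.
have := nondeg cX cY cZ nt Yx Zx Xy Zy Xz Yz.
by rewrite d0 eqxx.
Qed.

Theorem lemma3 (R : realType) (A B C D : set (R * R)%type) :
  compact_convex A -> compact_convex B -> compact_convex C -> compact_convex D ->
  A `&` B !=set0 -> A `&` C !=set0 -> A `&` D !=set0 ->
  B `&` C !=set0 -> B `&` D !=set0 -> C `&` D !=set0 ->
  oset A B C = 0 -> oset A B D = 0 ->
  oset A C D != 0 -> oset B C D != 0 ->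
  oset A C D = oset B C D.
Proof.
move=> [_ cA] [_ cB] [_ cC] [_ cD] nAB nAC nAD nBC nBD nCD oABC oABD.
have [p [Ap [Bp Cp]]] := oset0_ex cA cB cC nAB nAC nBC oABC.
have [q [Aq [Bq Dq]]] := oset0_ex cA cB cD nAB nAD nBD oABD.
rewrite /oset; case: asboolP => [_|ntA]; first by rewrite eqxx.
case: asboolP => [_|ntB]; first by rewrite eqxx.
move=> _ _; rewrite /opt.
have [Cx Dx] := getPex nCD.
have [Ay Dy] := getPex nAD. have [Az Cz] := getPex nAC.
have [By' Dy'] := getPex nBD. have [Bz' Cz'] := getPex nBC.
have ntA' : ~ (exists p, D p /\ A p /\ C p).
  by move=> [r [? [? ?]]]; apply: ntA; exists r.
have ntB' : ~ (exists p, D p /\ B p /\ C p).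
  by move=> [r [? [? ?]]]; apply: ntB; exists r.
rewrite (sgz3 cA cC cD ntA Cx Dx Ay Dy Az Cz Ap Cp).
rewrite [RHS](sgz3 cB cC cD ntB Cx Dx By' Dy' Bz' Cz' Bp Cp).
rewrite !(det3_cyc (get (C `&` D))).
rewrite (sgz3 cD cA cC ntA' Ap Cp Dx Cx Dy Ay Dq Aq).
by rewrite (sgz3 cD cB cC ntB' Bp Cp Dx Cx Dy' By' Dq Bq).
Qed.
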